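(* There exists a family of broadcast protocols $(P_n)_{n}$, $P_n=(Q_n,I_n,M_n,\Delta_n)$, with target sets $F_n\subseteq Q_n$, such that for every $n$: there exists a reconfigurable execution of $P_n$ covering $F_n$ with $3$ nodes; and every lossy execution of $P_n$ covering $F_n$ has $\Omega(n)$ nodes.
   Context: A broadcast protocol is a tuple $P=(Q,I,M,\Delta)$ where $Q$ is a finite set of states, $I\subseteq Q$ initial states, $M$ a finite message alphabet and $\Delta\subseteq Q\times\{!!m,\ ??m \mid m\in M\}\times Q$ ($!!m$ = broadcast, $??m$ = reception); protocols are complete for receptions (for every $q$, $m$ there is $q'$ with $(q,??m,q')\in\Delta$). A configuration is a finite undirected graph $\gamma=(V,E,L)$, $E$ symmetric irreflexive, $L:V\to Q$; initial if $L(V)\subseteq I$. A reconfigurable step from $(V,E,L)$ to $(V,E',L')$ ($E'$ arbitrary): some node $v$ and $m$ with $(L(v),!!m,L'(v))\in\Delta$, every neighbour $v'$ of $v$ in $E$ satisfies $(L(v'),??m,L'(v'))\in\Delta$, every other node keeps its label. A lossy step from $(V,E,L)$ to $(V,E,L')$ (edges fixed): some $v$, $m$ with $(L(v),!!m,L'(v))\in\Delta$ and either all other nodes keep their labels (lost broadcast) or as in the reconfigurable step with $E$ (successful broadcast). A reconfigurable (resp. lossy) execution is a sequence $\gamma_0,\dots,\gamma_r$ with $\gamma_0$ initial and consecutive reconfigurable (resp. lossy) steps; its number of nodes is $|V|$, and it covers $F$ if some node of $\gamma_r$ has a label in $F$. *)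

(* Defs.v *)
From mathcomp Require Import all_boot.
Set Implicit Arguments. Unset Strict Implicit. Unset Printing Implicit Defensive.

Inductive action (M : Type) : Type :=
| Bcast of M
| Recv of M.

Record protocol := Protocol {
  pstate : finType;
  pmsg : finType;
  pinit : {set pstate};
  pdelta : pstate -> action pmsg -> pstate -> bool
}.

Definition complete_recv (P : protocol) : Prop :=
  forall (q : pstate P) (m : pmsg P), exists q', pdelta q (Recv m) q'.

Record config (P : protocol) (V : finType) := Config {
  cedge : rel V;
  clab : V -> pstate P
}.

Definition wf_config P V (g : config P V) : Prop :=
  (forall x y, cedge g x y = cedge g y x) /\ (forall x, cedge g x x = false).

Definition initial_config P V (g : config P V) : Prop :=
  forall v, clab g v \in pinit P.

Definition bcast_success P V (g g' : config P V) (v : V) (m : pmsg P) : Prop :=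
  pdelta (clab g v) (Bcast m) (clab g' v) /\
  (forall v', cedge g v v' -> pdelta (clab g v') (Recv m) (clab g' v')) /\
  (forall v', v' != v -> ~~ cedge g v v' -> clab g' v' = clab g v').

Definition bcast_lost P V (g g' : config P V) (v : V) (m : pmsg P) : Prop :=
  pdelta (clab g v) (Bcast m) (clab g' v) /\
  (forall v', v' != v -> clab g' v' = clab g v').

(* Reconfigurable step: E' arbitrary. *)
Definition reconf_step P V (g g' : config P V) : Prop :=
  exists v m, bcast_success g g' v m.

Definition lossy_step P V (g g' : config P V) : Prop :=
  (forall x y, cedge g' x y = cedge g x y) /\
  exists v m, bcast_lost g g' v m \/ bcast_success g g' v m.

Definition execution P V (step : config P V -> config P V -> Prop)
  (gam : nat -> config P V) (r : nat) : Prop :=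
  (forall i, i <= r -> wf_config (gam i)) /\
  initial_config (gam 0) /\
  (forall i, i < r -> step (gam i) (gam i.+1)).

Definition reconf_execution P V := @execution P V (@reconf_step P V).
Definition lossy_execution P V := @execution P V (@lossy_step P V).

Definition covers P V (gam : nat -> config P V) (r : nat) (F : {set pstate P}) :=
  exists v, clab (gam r) v \in F.

(* Main.v *)
Require Import Defs.
From mathcomp Require Import all_boot zify.
Set Implicit Arguments. Unset Strict Implicit. Unset Printing Implicit Defensive.

Definition st (n : nat) : finType := (('I_n.+1 * bool) + 'I_5)%type.
Definition hH n : st n := inr (@Ordinal 5 0 isT).
Definition hA n : st n := inr (@Ordinal 5 1 isT).
Definition hC n : st n := inr (@Ordinal 5 2 isT).
Definition hC' n : st n := inr (@Ordinal 5 3 isT).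
Definition hE n : st n := inr (@Ordinal 5 4 isT).

Definition recv n (q : st n) (m : 'I_3) : st n :=
  match q with
  | inl (i, true) => if val m == 1 then inl (inord i.+1, false) else hE n
  | inl (_, false) => hE n
  | inr h => if (val h == 0) && (val m == 0) then hA n
             else if (val h == 3) && (val m == 2) then hH n
             else if (val h == 0) && (val m == 2) then hH n
             else hE n
  end.

Definition bcast n (q : st n) (m : 'I_3) (q' : st n) : bool :=
  match q with
  | inl (i, false) => (val m == 0) && (q' == inl (i, true))
  | inl (_, true) => false
  | inr h => ((val h == 1) && (val m == 1) && (q' == hC n))
             || ((val h == 2) && (val m == 2) && (q' == hC' n))
  end.

Definition delta n (q : st n) (a : action 'I_3) (q' : st n) : bool :=
  match a with Bcast m => bcast q m q' | Recv m => q' == recv q m end.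

Definition Prot n : protocol :=
  @Protocol (st n) (ordinal 3) [set (inl (ord0, false) : st n); hH n] (@delta n).

Definition Fset n : {set pstate (Prot n)} := [set (inl (ord_max, false) : st n)].

Lemma prot_complete n : complete_recv (Prot n).
Proof. move=> q m; exists (recv q m); exact: eqxx. Qed.

Definition isHs n (q : st n) : bool := if q is inr h then val h != 4 else false.
Definition spentS n (q : st n) : bool := if q is inr h then 2 <= val h else false.
Definition level n (q : st n) : nat := if q is inl (i, _) then val i else 0.

Section LB.
Variables (n : nat) (V : finType).
Definition spent (g : config (Prot n) V) (h : V) : bool :=
  spentS (clab g h) && [forall w, cedge g w h ==> ~~ isHs (clab g w)].
Definition cnt (g : config (Prot n) V) := #|[set y | spent g y]|.

Lemma recv_nonHs (q : st n) m : ~~ isHs q -> ~~ isHs (recv q m).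
Proof.
case: q => [[i [|]]|h] //=.
- by case: ifP.
- case: h => [[|[|[|[|[|k]]]]] Hk] //= _; by case: ifP.
Qed.

Lemma bcast_nonHs (q q' : st n) m : ~~ isHs q -> bcast q m q' -> ~~ isHs q'.
Proof.
case: q => [[i [|]]|h] //=.
- by move=> _ /andP[_ /eqP ->].
- by case: h => [[|[|[|[|[|k]]]]] Hk].
Qed.

Lemma nonHs_stable (g g' : config (Prot n) V) w :
  lossy_step g g' -> ~~ isHs (clab g w) -> ~~ isHs (clab g' w).
Proof.
move=> [_ [v [m [[Hb Ho]|[Hb [Hr Ho]]]]]] Hw.
- case: (eqVneq w v) Hw => [->|ne] Hw; first by move: Hw Hb; apply: bcast_nonHs.
  by rewrite Ho.
- case: (eqVneq w v) Hw => [->|ne] Hw; first by move: Hw Hb; apply: bcast_nonHs.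
  case E: (cedge g v w).
  + have := Hr _ E => /= /eqP ->; exact: recv_nonHs.
  + by rewrite Ho // E.
Qed.

Lemma bcast_spentS (q q' : st n) m : spentS q -> bcast q m q' -> spentS q'.
Proof.
case: q => [[i [|]]|h] //=.
case: h => [[|[|[|[|[|k]]]]] Hk] //= _.
by case/andP => _ /eqP ->.
Qed.

Lemma recv_spentS (q : st n) (m : 'I_3) : spentS q -> val m != 2 -> spentS (recv q m).
Proof.
case: q => [[i [|]]|h] //=.
case: h => [[|[|[|[|[|k]]]]] Hk] //= _; case: m => [[|[|[|k']]] Hk'] //=.
Qed.

Lemma bcast_m2 (q q' : st n) (m : 'I_3) : bcast q m q' -> val m = 2 -> isHs q.
Proof.
case: q => [[i [|]]|h] //=.
- by move=> /andP[/eqP -> _].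
- by case: h => [[|[|[|[|[|k]]]]] Hk].
Qed.

Lemma spent_stable (g g' : config (Prot n) V) h :
  lossy_step g g' -> spent g h -> spent g' h.
Proof.
move=> st /andP[Hs /forallP Hn].
have Hn' : [forall w, cedge g' w h ==> ~~ isHs (clab g' w)].
  apply/forallP => w; apply/implyP; rewrite st.1 => E.
  apply: nonHs_stable st _; exact: (implyP (Hn w) E).
rewrite /spent Hn' andbT.
move: st => [Ee [v [m [[Hb Ho]|[Hb [Hr Ho]]]]]].
- case: (eqVneq h v) Hs => [->|ne] Hs; last by rewrite Ho.
  by move: Hs Hb; apply: bcast_spentS.
- case: (eqVneq h v) Hs => [->|ne] Hs.
    by move: Hs Hb; apply: bcast_spentS.
  case E: (cedge g v h); last by rewrite Ho // E.
  have Hv := implyP (Hn v) E.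
  move: (Hr _ E) => /= /eqP ->.
  apply: recv_spentS Hs _; apply/negP => /eqP m2.
  by move: (bcast_m2 Hb m2); rewrite (negbTE Hv).
Qed.

Lemma bcast_level (q q' : st n) m : bcast q m q' -> level q' <= level q.
Proof.
case: q => [[i [|]]|h] //=.
- by move=> /andP[_ /eqP ->].
- by case/orP => /andP[_ /eqP ->].
Qed.

Lemma recv_level (q : st n) (m : 'I_3) :
  level (recv q m) = 0 \/ (val m = 1 /\ level (recv q m) <= (level q).+1).
Proof.
case: q => [[i [|]]|h] /=; last 2 first.
- by left.
- by left; case: h => [[|[|[|[|[|k]]]]] Hk]; case: m => [[|[|[|kk]]] Hkk].
case: ifP => [/eqP m1|]; last by left.
right; split => //=; rewrite /inord val_insubd; case: ifP => // _; lia.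
Qed.

Lemma bcast_m1 (q q' : st n) (m : 'I_3) : bcast q m q' -> val m = 1 ->
  q = hA n /\ q' = hC n.
Proof.
move=> Hb; case: m Hb => [[|[|[|kk]]] Hkk] //= Hb _; move: Hb.
case: q => [[i [|]]|h] //=.
case: h => [[|[|[|[|[|k]]]]] Hk] //=.
rewrite orbF => /eqP ->; split => //; congr inr; exact: val_inj.
Qed.

Lemma recv_m1_nonHs (q : st n) (m : 'I_3) : val m = 1 -> ~~ isHs (recv q m).
Proof.
case: m => [[|[|[|k]]] Hk] //= _.
by case: q => [[i [|]]|h] //=; case: h => [[|[|[|[|[|k]]]]] Hk2].
Qed.

Lemma step_inv (g g' : config (Prot n) V) :
  wf_config g -> lossy_step g g' ->
  (forall x, level (clab g x) <= cnt g) -> forall x, level (clab g' x) <= cnt g'.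
Proof.
move=> [Hsym Hirr] st Hinv x.
have sub : [set y | spent g y] \subset [set y | spent g' y].
  by apply/subsetP => y; rewrite !inE; apply: spent_stable.
have le : cnt g <= cnt g' by apply: subset_leq_card.
move: (st) => [Ee [v [m Hor]]].
have Hbv : pdelta (clab g v) (Bcast m) (clab g' v) by case: Hor => [[]|[]].
case: (eqVneq x v) => [->|ne].
  apply: leq_trans (bcast_level Hbv) _; exact: leq_trans (Hinv v) le.
case: Hor => [[_ Ho]|[_ [Hr Ho]]].
  by rewrite Ho //; apply: leq_trans (Hinv x) le.
case E: (cedge g v x); last by rewrite Ho ?E //; apply: leq_trans (Hinv x) le.
move: (Hr _ E) => /= /eqP ->.
case: (recv_level (clab g x) m) => [->|[m1 Hl]] //.
apply: leq_trans Hl _.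
have [Hv Hv'] := bcast_m1 Hbv m1.
have lt : cnt g < cnt g'.
  apply: proper_card; apply/properP; split => //.
  exists v; rewrite !inE.
    rewrite /spent Hv' /=; apply/forallP => w; apply/implyP; rewrite Ee => Ew.
    have Ew' : cedge g v w by rewrite Hsym.
    have nw : w != v by apply/eqP => ew; rewrite ew Hirr in Ew.
    move: (Hr _ Ew') => /= /eqP ->; exact: recv_m1_nonHs.
  by rewrite /spent Hv.
exact: leq_ltn_trans (Hinv x) lt.
Qed.

Lemma lossy_bound (gam : nat -> config (Prot n) V) r :
  lossy_execution gam r -> forall x, level (clab (gam r) x) <= #|V|.
Proof.
move=> [Hwf [Hini Hst]].
suff H : forall t, t <= r -> forall x, level (clab (gam t) x) <= cnt (gam t).
  move=> x; apply: leq_trans (H r (leqnn r) x) _; exact: max_card.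
elim=> [_|t IH Ht] x.
  move: (Hini x); rewrite !inE => /orP[] /eqP -> //.
apply: step_inv; first exact: Hwf (ltnW Ht).
  exact: Hst.
exact: IH (ltnW Ht).
Qed.
End LB.
Section UB.
Variable n : nat.
Definition uj (j : nat) : 'I_3 := if odd j then @Ordinal 3 2 isT else @Ordinal 3 1 isT.
Definition Kst j : st n := inl (inord j, false).
Definition Wst j : st n := inl (inord j, true).
Definition mreq : 'I_3 := @Ordinal 3 0 isT.
Definition mtok : 'I_3 := @Ordinal 3 1 isT.
Definition mres : 'I_3 := @Ordinal 3 2 isT.

Definition labj (j s : nat) (x : 'I_3) : st n :=
  if x == ord0 then (if s == 0 then Kst j else if s == 1 then Wst j else Kst j.+1)
  else if x == uj j then (if s == 0 then hH n else if s == 1 then hA n else hC n)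
  else (if j == 0 then hH n else hC' n).

Definition edgej (j s : nat) (x y : 'I_3) : bool :=
  (x != y) && (if s == 2 then (x != ord0) && (y != ord0)
               else ((x == ord0) && (y == uj j)) || ((y == ord0) && (x == uj j))).

Definition cfg j s : config (Prot n) 'I_3 := @Config (Prot n) (ordinal 3) (edgej j s) (labj j s).

Lemma Kup j : j < n -> recv (Wst j) mtok = Kst j.+1.
Proof. move=> lt; rewrite /= /Kst inordK //; lia. Qed.

Lemma cfg_wf j s : wf_config (cfg j s).
Proof.
split => [x y|x]; rewrite /cfg /= /edgej; last by rewrite eqxx.
case: (s == 2); rewrite /uj; case: (odd j);
by case: x => [[|[|[|k]]] Hk]; case: y => [[|[|[|k']]] Hk'].
Qed.

Lemma step0 j : j < n -> reconf_step (cfg j 0) (cfg j 1).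
Proof.
move=> lt; exists ord0, mreq; split; last split.
- by rewrite /= /labj /= /Kst /Wst eqxx.
- move=> v'; rewrite /= /edgej /labj /uj; case: (odd j);
  case: v' => [[|[|[|k]]] Hk] //=.
- move=> v'; rewrite /= /edgej /labj /uj; case: (odd j);
  case: v' => [[|[|[|k]]] Hk] //=.
Qed.

Lemma step1 j : j < n -> reconf_step (cfg j 1) (cfg j 2).
Proof.
move=> lt; exists (uj j), mtok; split; last split.
- by rewrite /= /labj /uj; case: (odd j).
- move=> v'; rewrite /= /edgej /labj -(Kup lt) /uj; case: (odd j);
  case: v' => [[|[|[|k]]] Hk] //= _; apply/eqP.
- move=> v'; rewrite /= /edgej /labj /uj; case: (odd j);
  case: v' => [[|[|[|k]]] Hk] //=.
Qed.

Lemma step2 j : j < n -> reconf_step (cfg j 2) (cfg j.+1 0).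
Proof.
move=> lt; exists (uj j), mres; split; last split.
- by rewrite /= /labj /uj /=; case: (odd j).
- move=> v'; rewrite /= /edgej /labj /uj /=; case: (odd j);
  by case: v' => [[|[|[|k]]] Hk] //= _; case: (j == 0).
- move=> v'; rewrite /= /edgej /labj /uj /=; case: (odd j).
  all: by case: v' => [[|[|[|k]]] Hk].
Qed.
End UB.

Definition gamU n (t : nat) : config (Prot n) (ordinal 3) := cfg n (t %/ 3) (t %% 3).

Theorem theorem4p1 :
  exists (P : nat -> protocol) (F : forall n, {set pstate (P n)}),
    (forall n, complete_recv (P n)) /\
    (forall n, exists (V : finType) (gam : nat -> config (P n) V) (r : nat),
        #|V| = 3 /\ reconf_execution gam r /\ covers gam r (F n)) /\
    (* Omega(n): exist c >= 1 and N with c * (#nodes) >= n for all n >= N *)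
    (exists c N : nat, 0 < c /\
      forall n, N <= n ->
      forall (V : finType) (gam : nat -> config (P n) V) (r : nat),
        lossy_execution gam r -> covers gam r (F n) -> n <= c * #|V|).
Proof.
exists Prot, Fset; split; first exact: prot_complete.
split.
  move=> n; exists (ordinal 3), (gamU n), (3 * n); split; first exact: card_ord.
  split; last first.
    exists ord0; rewrite /gamU /= inE.
    have -> : (3 * n) %/ 3 = n by lia.
    have -> : (3 * n) %% 3 = 0 by lia.
    rewrite /labj /= /Kst; apply/eqP; congr inl; congr pair; apply: val_inj.
    by rewrite /= inordK.
  split; first by move=> i _; exact: cfg_wf.
  split.
    move=> x; rewrite /gamU /= !inE /labj /uj /=.
    case: x => [[|[|[|k]]] Hk] //=.
    apply/orP; left; apply/eqP; congr inl; congr pair; apply: val_inj.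
    by rewrite /= inordK.
  move=> i lt; rewrite /gamU.
  have jn : i %/ 3 < n by lia.
  have : i %% 3 < 3 by lia.
  case E: (i %% 3) => [|[|[|s]]] // _.
  - have -> : i.+1 %/ 3 = i %/ 3 by lia.
    have -> : i.+1 %% 3 = 1 by lia.
    exact: step0.
  - have -> : i.+1 %/ 3 = i %/ 3 by lia.
    have -> : i.+1 %% 3 = 2 by lia.
    exact: step1.
  - have -> : i.+1 %/ 3 = (i %/ 3).+1 by lia.
    have -> : i.+1 %% 3 = 0 by lia.
    exact: step2.
exists 1, 0; split => // n _ V gam r Hex [v Hv].
rewrite mul1n.
have := lossy_bound Hex v.
by move: Hv; rewrite inE => /eqP ->.
Qed.
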